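(* Let $A: E\supseteq D(A)\to E$ be a closed linear operator on a complex Banach space $E$. Assume that all sufficiently large real numbers $\lambda$ belong to $\rho(A)$ and that $\lambda R(\lambda,A)$ is bounded in operator norm as $\lambda\to\infty$. If there exist $\mu_0\in\rho(A)$ and an integer $k\ge1$ such that $R(\mu_0,A)^k$ is compact, then $R(\lambda,A)$ is compact for every $\lambda\in\rho(A)$.
   Context: $R(\lambda,A)=(\lambda-A)^{-1}$ and $\rho(A)$ is the resolvent set. *)

(* Defs.v *)
From HB Require Import structures.
From mathcomp Require Import all_boot all_algebra.
From mathcomp Require Import all_classical all_reals all_analysis.
From mathcomp.real_closed Require Import complex.
Import numFieldNormedType.Exports.
Local Open Scope classical_set_scope.
Local Open Scope ring_scope.
Local Open Scope complex_scope.

Section OperatorDefs.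
Context {R : realType} {E : normedModType R[i]}.

(* D is a linear subspace of E and A : D(A) -> E is linear on D
   (values of A outside D are irrelevant). *)
Definition linear_op (D : set E) (A : E -> E) : Prop :=
  [/\ D 0,
      (forall x y, D x -> D y -> D (x + y)),
      (forall (c : R[i]) x, D x -> D (c *: x)),
      (forall x y, D x -> D y -> A (x + y) = A x + A y) &
      (forall (c : R[i]) x, D x -> A (c *: x) = c *: A x)].

Definition closed_operator (D : set E) (A : E -> E) : Prop :=
  linear_op D A /\ closed [set p : E * E | D p.1 /\ p.2 = A p.1].

Definition is_resolvent (D : set E) (A : E -> E) (l : R[i]) (T : E -> E) : Prop :=
  [/\ (forall (a : R[i]) x y, T (a *: x + y) = a *: T x + T y),
      continuous T,
      (forall y, D (T y) /\ l *: T y - A (T y) = y) &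
      (forall x, D x -> T (l *: x - A x) = x)].

Definition resolvent_set (D : set E) (A : E -> E) : set R[i] :=
  [set l | exists T, is_resolvent D A l T].

Definition compact_operator (T : E -> E) : Prop :=
  compact (closure (T @` [set x : E | `|x| <= 1])).

End OperatorDefs.

(* Main.v *)
Require Import Defs.
From HB Require Import structures.
From mathcomp Require Import all_boot all_order all_algebra.
From mathcomp Require Import all_classical all_reals all_analysis.
From mathcomp Require Import ring lra.
From mathcomp.real_closed Require Import complex.
Import numFieldNormedType.Exports.
Import Order.TTheory GRing.Theory Num.Theory.
Local Notation Re := complex.Re.
Local Notation Im := complex.Im.
Local Open Scope classical_set_scope.
Local Open Scope ring_scope.
Local Open Scope complex_scope.

Section S.
Context {R : realType} {E : completeNormedModType R[i]}.

Lemma ge0_complexE (z : R[i]) : 0 <= z -> z = (Re z)%:C.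
Proof. case: z => a b /ger0_Im /= ->. by []. Qed.

Definition nr (x : E) : R := Re `|x|.
Lemma normE (x : E) : `|x| = (nr x)%:C.
Proof. exact: ge0_complexE. Qed.
Lemma nr_ge0 x : 0 <= nr x.
Proof. by move: (normr_ge0 x); rewrite normE lecE /= => /andP[]. Qed.
Lemma nrD x y : nr (x + y) <= nr x + nr y.
Proof. by move: (ler_normD x y); rewrite !normE lecE /= => /andP[]. Qed.
Lemma nrB x y : nr (x - y) = nr (y - x).
Proof. by rewrite /nr distrC. Qed.
Lemma nrN x : nr (- x) = nr x.
Proof. by rewrite /nr normrN. Qed.
Lemma nrZ (a : R[i]) x : nr (a *: x) = Re `|a| * nr x.
Proof. by rewrite /nr normrZ (ge0_complexE _ (normr_ge0 a)) normE -rmorphM. Qed.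
Lemma Re_normC (c : R) : Re `|c%:C| = `|c|.
Proof. by rewrite normc_def /= expr0n /= addr0 sqrtr_sqr. Qed.
Lemma Re_norm_ge0 (a : R[i]) : 0 <= Re `|a|.
Proof. by move: (normr_ge0 a); rewrite lecE /= => /andP[]. Qed.
Lemma nr_eq0 x : nr x = 0 -> x = 0.
Proof. by move=> h; apply/normr0_eq0; rewrite normE h. Qed.
Lemma nr0 : nr 0 = 0.
Proof. by rewrite /nr normr0. Qed.

Definition tb (S : set E) := forall e : R, 0 < e ->
  exists s : seq E, forall x, S x -> exists2 c, c \in s & nr (x - c) < e.
Definition cop (T : E -> E) := tb (T @` [set x | nr x <= 1]).
Definition lin (T : E -> E) := forall (a : R[i]) x y, T (a *: x + y) = a *: T x + T y.
Definition bnd (T : E -> E) := exists2 C : R, 0 <= C & forall x, nr (T x) <= C * nr x.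


Lemma lin0 T : lin T -> T 0 = 0.
Proof. by move=> hT; have := hT (-1) 0 0; rewrite scaler0 addr0 scaleN1r addNr. Qed.
Lemma linB T : lin T -> forall u v, T (u - v) = T u - T v.
Proof. by move=> hT u v; have := hT (-1) v u; rewrite !scaleN1r addrC => ->; rewrite addrC. Qed.
Lemma linZ T : lin T -> forall a x, T (a *: x) = a *: T x.
Proof. by move=> hT a x; have := hT a x 0; rewrite !addr0 lin0 // addr0. Qed.

Lemma nrZR (c : R) x : 0 <= c -> nr (c%:C *: x) = c * nr x.
Proof. by move=> c0; rewrite nrZ Re_normC ger0_norm. Qed.

Lemma cop_ext T S : (forall x, T x = S x) -> cop T -> cop S.
Proof.
move=> h hT e e0; have [s hs] := hT e e0; exists s => _ [x bx <-].
by apply: hs; exists x => //; rewrite h.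
Qed.

Lemma cop_add T S : cop T -> cop S -> cop (fun x => T x + S x).
Proof.
move=> hT hS e e0.
have e2 : 0 < e / 2 by rewrite divr_gt0.
have [s1 h1] := hT _ e2; have [s2 h2] := hS _ e2.
exists [seq c1 + c2 | c1 <- s1, c2 <- s2] => _ [x bx <-].
have [c1 c1s d1] := h1 (T x) (ex_intro2 _ _ x bx erefl).
have [c2 c2s d2] := h2 (S x) (ex_intro2 _ _ x bx erefl).
exists (c1 + c2); first exact: allpairs_f.
have -> : T x + S x - (c1 + c2) = (T x - c1) + (S x - c2) by rewrite opprD addrACA.
by apply: (le_lt_trans (nrD _ _)); lra.
Qed.

Lemma cop_left B T : lin B -> bnd B -> cop T -> cop (fun x => B (T x)).
Proof.
move=> lB [C C0 hB] hT e e0.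
have d0 : 0 < e / (C + 1) by rewrite divr_gt0 // ltr_wpDl.
have [s hs] := hT _ d0.
exists [seq B c | c <- s] => _ [x bx <-].
have [c cs dc] := hs (T x) (ex_intro2 _ _ x bx erefl).
exists (B c); first exact: map_f.
rewrite -linB //; apply: (le_lt_trans (hB _)).
have hd : e / (C + 1) * (C + 1) = e by field; lra.
move: dc (nr_ge0 (T x - c)); set n := nr _; nra.
Qed.

Lemma lin_scale (a : R[i]) : lin (fun y : E => a *: y).
Proof. by move=> b x y; rewrite scalerDr !scalerA mulrC. Qed.

Lemma cop_scale a T : cop T -> cop (fun x => a *: T x).
Proof.
apply: (@cop_left (fun y => a *: y) T); first exact: lin_scale.
by exists (Re `|a|); [exact: Re_norm_ge0 | move=> x; rewrite nrZ].
Qed.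

Lemma cop_right T B : lin T -> lin B -> bnd B -> cop T -> cop (fun x => T (B x)).
Proof.
move=> lT lB [C C0 hB] hT e e0.
set r := C + 1.
have r0 : 0 < r by rewrite ltr_wpDl.
have d0 : 0 < e / r by rewrite divr_gt0.
have [s hs] := hT _ d0.
exists [seq r%:C *: c | c <- s] => _ [x bx <-].
have bz : nr (r^-1%:C *: B x) <= 1.
  rewrite nrZR ?invr_ge0 ?(ltW r0) //.
  have := hB x; rewrite /= in bx => hBx.
  rewrite -(ler_pM2l r0) mulrA mulfV ?gt_eqF // mul1r mulr1.
  move: (nr_ge0 x) (nr_ge0 (B x)) => ? ?; rewrite /r; nra.
have [c cs dc] := hs (T (r^-1%:C *: B x)) (ex_intro2 _ _ (r^-1%:C *: B x) bz erefl).
exists (r%:C *: c); first exact: map_f.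
have -> : T (B x) = r%:C *: T (r^-1%:C *: B x).
  by rewrite linZ // scalerA -rmorphM /= mulfV ?gt_eqF // scale1r.
rewrite -scalerBr nrZR ?(ltW r0) //.
have hd : e / r * r = e by field; lra.
move: dc (nr_ge0 (T (r^-1%:C *: B x) - c)); set n := nr _; nra.
Qed.

Lemma cop_lim T : (forall e : R, 0 < e -> exists S, cop S /\
   forall x, nr x <= 1 -> nr (T x - S x) <= e) -> cop T.
Proof.
move=> h e e0.
have e2 : 0 < e / 2 by rewrite divr_gt0.
have [S [hS hTS]] := h _ e2.
have [s hs] := hS _ e2.
exists s => _ [x bx <-].
have [c cs dc] := hs (S x) (ex_intro2 _ _ x bx erefl).
exists c => //.
have -> : T x - c = (T x - S x) + (S x - c) by rewrite addrA subrK.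
apply: (le_lt_trans (nrD _ _)); have := hTS x bx; lra.
Qed.

Lemma cont_bnd T : lin T -> continuous T -> bnd T.
Proof.
move=> lT cT.
have T0 := lin0 _ lT.
have : \forall x \near (0:E), nr (T x) < 1.
  have h1 : nbhs (T 0) [set y | nr y < 1].
    rewrite T0; apply/nbhs_norm0P; exists 1 => //= y.
    by rewrite /= normE -(ltcR _ 1).
  exact: (cT 0 _ h1).
move=> /nbhs_norm0P [r /= r0 hr].
have rE := ge0_complexE _ (ltW r0).
set d := Re r in rE.
have d0 : 0 < d by move: r0; rewrite rE ltcE /= => /andP[].
exists (2 / d); first by rewrite divr_ge0 // ltW.
move=> x.
have [x0|xn0] := eqVneq (nr x) 0.
  by rewrite (nr_eq0 _ x0) T0 nr0 mulr0.
have n0 : 0 < nr x by rewrite lt_neqAle eq_sym xn0 nr_ge0.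
set c := d / (2 * nr x).
have c0 : 0 < c by rewrite divr_gt0 // mulr_gt0.
have := hr (c%:C *: x).
rewrite /= normE nrZR ?(ltW c0) // rE ltcR linZ // nrZR ?(ltW c0) //.
have hc : c * nr x = d / 2 by rewrite /c; field; rewrite gt_eqF.
rewrite hc => /(_ ltac:(lra)) h1.
have hc2 : c * (2 / d * nr x) = 1 by rewrite /c; field; rewrite !gt_eqF.
rewrite -(ler_pM2l c0) hc2; exact: ltW.
Qed.


Lemma ultra_union (F : set_system E) (P : E -> set E) (s : seq E) :
  UltraFilter F -> F [set x | exists2 c, c \in s & P c x] -> exists c, c \in s /\ F (P c).
Proof.
move=> UF; elim: s => [|c s IH] Fu.
  by case: (filter_ex Fu) => x [c]; rewrite in_nil.
case: (in_ultra_setVsetC (P c) UF) => [Fc|FnC]; first by exists c; rewrite mem_head.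
have [c' [c's Fc']] : exists c', c' \in s /\ F (P c').
  apply: IH; apply: filterS (filterI Fu FnC) => x [[c']].
  rewrite in_cons => /orP[/eqP->|c's] Pc' nPc; first by [].
  by exists c'.
by exists c'; rewrite in_cons c's orbT.
Qed.

Lemma L1 (S : set E) : compact (closure S) -> tb S.
Proof.
rewrite compact_cover => cS e e0.
have eC : 0 < e%:C by rewrite ltcR.
have hc : closure S `<=` cover (closure S) (fun c => ball c e%:C).
  by move=> x clx; exists x => //; exact: ballxx.
have [D' D'sub hcov] := cS E (closure S) (fun c => ball c e%:C)
  (fun i _ => ball_open i _) hc.
exists (finmap.enum_fset D') => x Sx.
have [c cD' bc] := hcov x (subset_closure Sx).
exists c; first exact: cD'.
move: bc; rewrite -ball_normE /ball_ /= normE ltcR nrB //.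
Qed.

Lemma L2 (S : set E) : tb S -> compact (closure S).
Proof.
move=> hS; rewrite compact_ultra => F UF Fcl.
have cF : cauchy F.
  apply: cauchy_exP => eps eps0.
  have eE := ge0_complexE _ (ltW eps0); set re := Re eps in eE.
  have re0 : 0 < re by move: eps0; rewrite eE ltcE /= => /andP[].
  have re2 : 0 < re / 2 by rewrite divr_gt0.
  have re2C : 0 < (re / 2)%:C by rewrite ltcR.
  have [s hs] := hS _ re2.
  have Fu : F [set x | exists2 c, c \in s & ball c eps x].
    apply: filterS Fcl => x clx.
    have [y [Sy bxy]] := clx _ (nbhsx_ballx x _ re2C).
    have [c cs hc] := hs y Sy.
    exists c => //.
    move: bxy; rewrite -ball_normE /ball_ /= eE !normE !ltcR => bxy.
    have -> : c - x = (c - y) + (y - x) by rewrite addrA subrK.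
    apply: (le_lt_trans (nrD _ _)); rewrite (nrB c y) (nrB y x); lra.
  have [c [_ Fc]] := ultra_union _ _ _ UF Fu.
  by exists c.
have Fp : F --> lim F by apply: cauchy_cvg.
exists (lim F); split; last exact: Fp.
apply: (@closed_closure _ S (lim F)) => B nB.
have FB := Fp _ nB.
exact: filter_ex (filterI Fcl FB).
Qed.

Lemma cop_compact T : compact_operator T <-> cop T.
Proof.
rewrite /compact_operator.
have -> : [set x : E | `|x| <= 1] = [set x | nr x <= 1].
  by apply/seteqP; split => x /=; rewrite normE lecE /= eqxx.
split; first exact: L1.
exact: L2.
Qed.


Lemma sub_solve (u v w : E) : u - v = w -> v = u - w.
Proof. by move=> <-; rewrite opprB addrC subrK. Qed.

Lemma res_id (D : set E) (A : E -> E) a b T1 T2 :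
  is_resolvent D A a T1 -> is_resolvent D A b T2 ->
  forall y, T1 y = T2 y + (b - a) *: T2 (T1 y).
Proof.
case=> _ _ rng1 _ [lin2 _ _ inv2] y.
have [Dz hz] := rng1 y.
set z := T1 y in Dz hz *.
have e1 : b *: z - A z = (b - a) *: z + y.
  by rewrite -hz scalerBl addrA subrK.
by rewrite -{1}(inv2 _ Dz) e1 lin2 addrC.
Qed.

Lemma res_cop_step (D : set E) (A : E -> E) (M l0 : R) mu0 T0 j :
  (forall l : R, l0 <= l -> exists Tl, is_resolvent D A l%:C Tl /\
      forall x, nr (l%:C *: Tl x) <= M * nr x) ->
  is_resolvent D A mu0 T0 -> cop (iter j.+2 T0) -> cop (iter j.+1 T0).
Proof.
move=> hR r0 hc.
have [lin0 cont0 rng0 inv0] := r0.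
have [C0 C00 hC0] := cont_bnd _ lin0 cont0.
have hit : forall n x, nr (iter n T0 x) <= C0 ^+ n * nr x.
  elim=> [|n IH] x; first by rewrite expr0 mul1r.
  rewrite iterS; apply: (le_trans (hC0 _)).
  by rewrite exprS -mulrA ler_wpM2l.
set m := Re `|mu0|.
have m0 : 0 <= m by exact: Re_norm_ge0.
set Kb := m * C0 ^+ j.+1 + C0 ^+ j.
have Kb0 : 0 <= Kb by rewrite addr_ge0 // ?mulr_ge0 // exprn_ge0.
apply: cop_lim => e e0.
set nu := Num.max l0 1 + `|M| * Kb / e.
have q0 : 0 <= `|M| * Kb / e by rewrite divr_ge0 ?mulr_ge0 // ltW.
have nul0 : l0 <= nu by rewrite /nu; apply: ler_wpDr => //; rewrite le_max lexx.
have nu1 : 1 <= nu by rewrite /nu; apply: ler_wpDr => //; rewrite le_max lexx orbT.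
have nu0 : 0 < nu by apply: lt_le_trans nu1.
have nue : `|M| * Kb <= nu * e.
  rewrite /nu mulrDl divfK ?gt_eqF // lerDr; apply: mulr_ge0; last exact: ltW.
  by rewrite le_max ler01 orbT.
have [Tn [rn hn]] := hR nu nul0.
have [linn contn rngn invn] := rn.
have [Cn Cn0 hCn] := cont_bnd _ linn contn.
exists (fun x => nu%:C *: (iter j.+2 T0 x + (mu0 - nu%:C) *: Tn (iter j.+2 T0 x))).
split.
  apply: cop_scale; apply: cop_add => //; apply: cop_scale.
  exact: (cop_left Tn (iter j.+2 T0) linn (ex_intro2 _ _ Cn Cn0 hCn) hc).
move=> x bx.
set y' := iter j T0 x.
have -> : iter j.+1 T0 x = T0 y' by [].
have -> : iter j.+2 T0 x = T0 (T0 y') by [].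
set y := T0 y'.
have hid : T0 y + (mu0 - nu%:C) *: Tn (T0 y) = Tn y.
  have h := res_id _ _ _ _ _ _ r0 rn y.
  rewrite {1}h -addrA -scalerDl.
  have -> : nu%:C - mu0 + (mu0 - nu%:C) = 0 by ring.
  by rewrite scale0r addr0.
rewrite hid.
have [Dy hy] := rng0 y'.
have Ay : A y = mu0 *: y - y' by apply: sub_solve.
have [_ _] := (rngn y).
have hTn := invn y Dy.
rewrite linB // linZ // in hTn.
have TnA : Tn (A y) = nu%:C *: Tn y - y by apply: sub_solve.
have -> : y - nu%:C *: Tn y = - Tn (A y) by rewrite TnA opprB.
rewrite nrN.
have hb : nr (A y) <= Kb.
  rewrite Ay; apply: (le_trans (nrD _ _)); rewrite nrN nrZ -/m.
  have h1 := hit j.+1 x; have h2 := hit j x.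
  rewrite /= -/y' in h1 h2; rewrite /= in bx.
  have hx0 := nr_ge0 x.
  have p1 : 0 <= C0 ^+ j.+1 by rewrite exprn_ge0.
  have p2 : 0 <= C0 ^+ j by rewrite exprn_ge0.
  have h1' : nr y <= C0 ^+ j.+1 * nr x := h1.
  have p3 : 0 <= m * C0 ^+ j.+1 by rewrite mulr_ge0.
  rewrite /Kb; nra.
have ha := hn (A y); rewrite nrZR ?(ltW nu0) // in ha.
rewrite -(ler_pM2l nu0); apply: (le_trans ha); apply: le_trans nue.
apply: (le_trans (ler_wpM2r (nr_ge0 _) (ler_norm M))).
by apply: ler_wpM2l.
Qed.

End S.

Theorem proposition3p2 (R : realType) (E : completeNormedModType R[i])
  (D : set E) (A : E -> E) :
  closed_operator D A ->
  (exists l0 : R, forall l : R, l0 <= l -> resolvent_set D A l%:C) ->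
  (exists (M l1 : R), forall l : R, l1 <= l -> forall T : E -> E,
      is_resolvent D A l%:C T -> forall x : E, `|l%:C *: T x| <= M%:C * `|x|) ->
  (exists (mu0 : R[i]) (T0 : E -> E) (k : nat),
      (1 <= k)%N /\ is_resolvent D A mu0 T0 /\ compact_operator (iter k T0)) ->
  forall (l : R[i]) (T : E -> E), is_resolvent D A l T -> compact_operator T.
Proof.
move=> _ [l0 hres] [M [l1 hM]] [mu0 [T0 [k [k1 [r0 hk]]]]] l T rT.
have hR : forall l : R, Num.max l0 l1 <= l -> exists Tl, is_resolvent D A l%:C Tl /\
      forall x, nr (l%:C *: Tl x) <= M * nr x.
  move=> l' hl.
  have hl0 : l0 <= l' by apply: le_trans hl; rewrite le_max lexx.
  have hl1 : l1 <= l' by apply: le_trans hl; rewrite le_max lexx orbT.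
  have [Tl rTl] := hres l' hl0.
  exists Tl; split => // x.
  have := hM l' hl1 Tl rTl x.
  by rewrite !normE -rmorphM lecR.
have desc : forall d j, cop (iter (j.+1 + d) T0) -> cop (iter j.+1 T0).
  elim=> [|d IH] j; first by rewrite addn0.
  rewrite -addSnnS => h.
  exact: (@res_cop_step R E D A M (Num.max l0 l1) mu0 T0 j hR r0 (IH j.+1 h)).
case: k k1 hk => // k _ /cop_compact hk.
have c0 : cop T0.
  have := desc k 0; rewrite add1n => /(_ hk).
  by apply: cop_ext.
apply/cop_compact.
apply: (cop_ext (fun x => T0 x + (mu0 - l) *: T0 (T x)) T).
  by move=> x; rewrite -(res_id _ _ _ _ _ _ rT r0 x).
have [linT contT _ _] := rT.
have [lin0 _ _ _] := r0.
apply: cop_add => //; apply: cop_scale.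
exact: (cop_right T0 T lin0 linT (cont_bnd _ linT contT) c0).
Qed.
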